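(* Let $G$ be a finite $2$-group and let $N$ be a characteristic subgroup of $G$. If $G/N$ does not satisfy property $( * )$, then $G$ does not satisfy property $( * )$.
   Context: An involution is an element of order exactly $2$. A finite group $G$ satisfies property $( * )$ if there exist a group $\Gamma$ generated by involutions and a subgroup of index $2$ in $\Gamma$ that is isomorphic to $G$. *)

(* Defs.v *)
From mathcomp Require Import all_boot all_fingroup all_solvable.
Set Implicit Arguments. Unset Strict Implicit. Unset Printing Implicit Defensive.
Local Open Scope group_scope.

Definition involutions (gT : finGroupType) (A : {set gT}) : {set gT} :=
  [set x in A | #[x] == 2%N].

(* Such a Gamma is necessarily finite
   (of order 2|G|), so it is represented as a group in some finGroupType. *)
Definition prop_star (gT : finGroupType) (G : {set gT}) : Prop :=
  exists (rT : finGroupType) (Gamma H : {group rT}),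
    [/\ Gamma :=: <<involutions Gamma>>,
        H \subset Gamma,
        #|Gamma : H| = 2%N &
        H \isog G].

(* Main.v *)
Require Import Defs.
From mathcomp Require Import all_boot all_fingroup all_solvable.
Local Open Scope group_scope.

Theorem lemma1 (gT : finGroupType) (G N : {group gT}) :
  2.-group G -> N \char G -> ~ prop_star (G / N) -> ~ prop_star G.
Proof.
move=> _ chNG notQ [rT [Gam [H [defG sHG iHG isoH]]]].
apply: notQ.
have isoGH : G \isog H by rewrite isog_sym.
have [g injg gG] := isogP isoGH.
have sNG : N \subset G := char_sub chNG.
set M := g @* N.
have chMH : M \char H by rewrite -gG; apply: injm_char.
have nsHG : H <| Gam := index2_normal sHG iHG.
have nsMG : M <| Gam := char_normal_trans chMH nsHG.
have nMG : Gam \subset 'N(M) := normal_norm nsMG.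
have sMH : M \subset H := char_sub chMH.
exists (coset_of M), (Gam / M)%G, (H / M)%G; split.
- apply/eqP; rewrite eqEsubset; apply/andP; split; last first.
    by rewrite gen_subG; apply/subsetP => y; rewrite inE => /andP[].
  have sIN : involutions Gam \subset 'N(M).
    apply: subset_trans nMG; apply/subsetP => y; rewrite inE => /andP[] //.
  rewrite /= /quotient; set IG := involutions _; rewrite {1}defG (morphim_gen _ sIN) gen_subG.
  apply/subsetP => y /morphimP[x xN xI ->{y}].
  move: xI; rewrite inE => /andP[xG /eqP ox].
  have cxG : coset M x \in Gam / M by rewrite mem_quotient.
  change (coset M x \in <<IG>>). case: (eqVneq (coset M x) 1) => [->|ne1]; first exact: group1.
  apply: mem_gen; rewrite inE cxG /=.
  have hd : #[coset M x] %| 2.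
    by rewrite order_dvdn -morphX // -ox expg_order morph1.
  have o1 : #[coset M x] != 1%N by rewrite order_eq1.
  have := dvdn_leq (isT : 0 < 2)%N hd; have := order_gt0 (coset M x).
  move: o1; case: #[coset M x] => [|[|[|n]]] //.
- exact: quotientS.
- rewrite index_quotient_eq //; last by rewrite (setIidPr (subset_trans sMH sHG)).
- rewrite isog_sym; apply/isogP.
  have nsNG : N <| G := char_normal chNG.
  exists (quotm g nsNG); first exact: injm_quotm.
  by rewrite morphim_quotm gG.
Qed.
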